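(* Let $A$ be a T-brace, let $n$ be a natural number and suppose that $a\in\zeta_n(\star,A)\setminus\zeta(\star,A)$. If $a$ has infinite order in $(A,+)$, then $a\star a\neq 0$.
   Context: A (left) brace is a set $A$ with two operations $+$ and $\cdot$ such that $(A,+)$ is an abelian group, $(A,\cdot)$ is a group, and $a(b+c)=ab+ac-a$ for all $a,b,c\in A$. Put $a\star b=ab-a-b$. A subbrace is a subset which is a subgroup of both $(A,+)$ and $(A,\cdot)$; a subbrace $L$ is an ideal if $a\star z, z\star a\in L$ for all $a\in A$, $z\in L$, and then the quotient brace $A/L$ is defined. $A$ is a T-brace if whenever $I$ is an ideal of $J$ and $J$ is an ideal of $A$, then $I$ is an ideal of $A$. The $\star$-center is $\zeta(\star,A)=\{a: a\star x=x\star a=0\ \forall x\}$; the upper $\star$-central series is $\zeta_0(\star,A)=0$, $\zeta_{n+1}(\star,A)/\zeta_n(\star,A)=\zeta(\star,A/\zeta_n(\star,A))$. *)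

(* Defs.v *)
From HB Require Import structures.
From mathcomp Require Import all_boot all_algebra.
Set Implicit Arguments. Unset Strict Implicit. Unset Printing Implicit Defensive.
Import GRing.Theory.
Local Open Scope ring_scope.

Definition is_brace (A : zmodType) (mul : A -> A -> A) (inv : A -> A) (one : A) : Prop :=
  [/\ (forall a b c, mul a (mul b c) = mul (mul a b) c),
      (forall a, mul one a = a /\ mul a one = a),
      (forall a, mul (inv a) a = one /\ mul a (inv a) = one)
    & (forall a b c, mul a (b + c) = mul a b + mul a c - a)].

Definition bstar (A : zmodType) (mul : A -> A -> A) (a b : A) : A := mul a b - a - b.

Definition subbrace (A : zmodType) (mul : A -> A -> A) (inv : A -> A) (one : A)
  (S : A -> Prop) : Prop :=
  [/\ S 0, (forall x y, S x -> S y -> S (x - y)),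
      S one, (forall x y, S x -> S y -> S (mul x y))
    & (forall x, S x -> S (inv x))].

Definition ideal_of (A : zmodType) (mul : A -> A -> A) (inv : A -> A) (one : A)
  (J I : A -> Prop) : Prop :=
  [/\ subbrace mul inv one I, (forall z, I z -> J z)
    & (forall a z, J a -> I z -> I (bstar mul a z) /\ I (bstar mul z a))].

Definition ideal (A : zmodType) (mul : A -> A -> A) (inv : A -> A) (one : A)
  (I : A -> Prop) : Prop := ideal_of mul inv one (fun _ => True) I.

Definition T_brace (A : zmodType) (mul : A -> A -> A) (inv : A -> A) (one : A) : Prop :=
  forall I J : A -> Prop, ideal_of mul inv one J I -> ideal mul inv one J ->
    ideal mul inv one I.

(* Upper star-central series, with zeta_(n+1) described as the preimage in A
   of the star-center of A / zeta_n: a + zeta_n is star-central in the quotient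
   iff a * x and x * a lie in zeta_n for all x. *)
Fixpoint zeta (A : zmodType) (mul : A -> A -> A) (n : nat) : A -> Prop :=
  match n with
  | O => fun a => a = 0
  | S m => fun a => forall x, zeta mul m (bstar mul a x) /\ zeta mul m (bstar mul x a)
  end.

(* Main.v *)
Require Import Defs.
From mathcomp Require Import all_boot all_algebra.
Import GRing.Theory.
Local Open Scope ring_scope.

Lemma int_ind2 (P : int -> Prop) : P 0 -> (forall m, P m -> P (m + 1) /\ P (m - 1)) -> forall m, P m.
Proof.
move=> P0 PS m; elim/int_rec: m => [|n IH|n IH]; first by [].
- by rewrite -addn1 PoszD; case: (PS _ IH).
- have -> : - (n.+1%:Z) = - n%:Z - 1 by rewrite -addn1 PoszD opprD.
  by case: (PS _ IH).
Qed.

Lemma one0 {A : zmodType} {mul : A -> A -> A} {inv : A -> A} {one : A}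
  (HA : is_brace mul inv one) : one = 0.
Proof.
case: HA => _ Hid _ Hd.
have e := Hd one 0 0; rewrite addr0 in e.
have h : mul one 0 = one.
  have : mul one 0 - mul one 0 = mul one 0 + mul one 0 - one - mul one 0 by rewrite -e.
  rewrite subrr addrAC addrK => /eqP; rewrite eq_sym subr_eq0 => /eqP //.
by rewrite -h (Hid 0).1.
Qed.

Lemma mul_star {A : zmodType} (mul : A -> A -> A) (u v : A) :
  mul u v = u + v + bstar mul u v.
Proof. by rewrite /bstar addrC !addrA addrAC !addrNK. Qed.

Lemma mulx0 {A : zmodType} {mul : A -> A -> A} {inv : A -> A} {one : A}
  (HA : is_brace mul inv one) x : mul x 0 = x.
Proof.
have := one0 HA; case: HA => _ Hid _ Hd e.
by move: (Hid x).2; rewrite e.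
Qed.

Lemma mul0x {A : zmodType} {mul : A -> A -> A} {inv : A -> A} {one : A}
  (HA : is_brace mul inv one) x : mul 0 x = x.
Proof.
have := one0 HA; case: HA => _ Hid _ Hd e.
by move: (Hid x).1; rewrite e.
Qed.

Lemma starx0 {A : zmodType} {mul : A -> A -> A} {inv : A -> A} {one : A}
  (HA : is_brace mul inv one) x : bstar mul x 0 = 0.
Proof. by rewrite /bstar (mulx0 HA) subrr subr0. Qed.

Lemma star0x {A : zmodType} {mul : A -> A -> A} {inv : A -> A} {one : A}
  (HA : is_brace mul inv one) x : bstar mul 0 x = 0.
Proof. by rewrite /bstar (mul0x HA) subr0 subrr. Qed.

Lemma starD {A : zmodType} {mul : A -> A -> A} {inv : A -> A} {one : A}
  (HA : is_brace mul inv one) x b c :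
  bstar mul x (b + c) = bstar mul x b + bstar mul x c.
Proof.
case: HA => _ _ _ Hd; rewrite /bstar Hd.
rewrite opprD !addrA; congr (_ + _); rewrite !(addrAC _ (mul x c)); congr (_ + _); exact: addrAC.
Qed.

Lemma starN {A : zmodType} {mul : A -> A -> A} {inv : A -> A} {one : A}
  (HA : is_brace mul inv one) x b :
  bstar mul x (- b) = - bstar mul x b.
Proof.
have := starD HA x b (-b); rewrite subrr (starx0 HA) => e.
by apply/eqP; rewrite -addr_eq0 addrC -e.
Qed.

Lemma starZ {A : zmodType} {mul : A -> A -> A} {inv : A -> A} {one : A}
  (HA : is_brace mul inv one) x b m :
  bstar mul x (b *~ m) = (bstar mul x b) *~ m.
Proof.
elim/int_ind2: m => [|m IH]; first by rewrite !mulr0z (starx0 HA).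
split; first by rewrite !mulrzDr !mulr1z (starD HA) IH.
by rewrite !mulrzBr !mulr1z (starD HA) (starN HA) IH.
Qed.

Lemma starM {A : zmodType} {mul : A -> A -> A} {inv : A -> A} {one : A}
  (HA : is_brace mul inv one) u v x :
  bstar mul (mul u v) x = bstar mul u (bstar mul v x) + bstar mul u x + bstar mul v x.
Proof.
have e1 : mul v x = bstar mul v x + x + v by rewrite /bstar !addrNK.
case: HA => Has _ _ Hd.
move: (bstar mul v x) e1 => P e1.
rewrite /bstar -Has e1 Hd Hd.
rewrite (addrAC (_ - _ - P)) addrNK (addrAC _ (mul u v)) addrK !addrA (addrAC (mul u P)) //.
Qed.


Lemma starInvL {A : zmodType} {mul : A -> A -> A} {inv : A -> A} {one : A}
  (HA : is_brace mul inv one) u x :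
  bstar mul (inv u) x = - bstar mul (inv u) (bstar mul u x) - bstar mul u x.
Proof.
have := starM HA (inv u) u x.
have [_ _ Hi _] := HA.
rewrite (Hi u).1 (one0 HA) (star0x HA) => /eqP; rewrite eq_sym -addrA addrCA addr_eq0.
by move/eqP => ->; rewrite opprD.
Qed.

Lemma invE {A : zmodType} {mul : A -> A -> A} {inv : A -> A} {one : A}
  (HA : is_brace mul inv one) u :
  inv u = - u - bstar mul (inv u) u.
Proof.
have [_ _ Hi _] := HA.
have := mul_star mul (inv u) u; rewrite (Hi u).1 (one0 HA) => /eqP.
by rewrite eq_sym -addrA addr_eq0 opprD => /eqP.
Qed.

Lemma oppE {A : zmodType} {mul : A -> A -> A} {inv : A -> A} {one : A}
  (HA : is_brace mul inv one) u :
  - u = inv u + bstar mul u (inv u).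
Proof.
have [_ _ Hi _] := HA.
have := mul_star mul u (inv u); rewrite (Hi u).2 (one0 HA) => /eqP.
by rewrite eq_sym -addrA addrC addr_eq0 => /eqP ->.
Qed.

Lemma addE {A : zmodType} {mul : A -> A -> A} {inv : A -> A} {one : A}
  (HA : is_brace mul inv one) u v :
  u + v = mul u (bstar mul (inv u) v + v).
Proof.
have [_ _ Hi _] := HA.
have := starM HA u (inv u) v.
rewrite (Hi u).2 (one0 HA) (star0x HA) => e.
rewrite (mul_star mul) (starD HA).
have -> : bstar mul u (bstar mul (inv u) v) + bstar mul u v = - bstar mul (inv u) v.
  by apply/eqP; rewrite -addr_eq0 e.
by rewrite (addrC (bstar _ _ _)) addrA addrK.
Qed.

Lemma starAdd {A : zmodType} {mul : A -> A -> A} {inv : A -> A} {one : A}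
  (HA : is_brace mul inv one) u v x :
  bstar mul (u + v) x = bstar mul u (bstar mul (bstar mul (inv u) v + v) x)
     + bstar mul u x + bstar mul (bstar mul (inv u) v + v) x.
Proof. by rewrite {1}(addE HA) (starM HA). Qed.

Lemma zeta0 {A : zmodType} {mul : A -> A -> A} {inv : A -> A} {one : A}
  (HA : is_brace mul inv one) k : zeta mul k 0.
Proof. elim: k => [//|k IH] /= x; by rewrite (starx0 HA) (star0x HA). Qed.

Lemma zeta_mono {A : zmodType} {mul : A -> A -> A} {inv : A -> A} {one : A}
  (HA : is_brace mul inv one) {k z} : zeta mul k z -> zeta mul k.+1 z.
Proof.
elim: k z => [|k IH] z /=.
  by move=> -> x; rewrite (starx0 HA) (star0x HA).
by move=> H x; split; apply: IH; case: (H x).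
Qed.

Lemma zeta_star {A : zmodType} {mul : A -> A -> A} {inv : A -> A} {one : A}
  (HA : is_brace mul inv one) {k z} x : zeta mul k z ->
  zeta mul k (bstar mul x z) /\ zeta mul k (bstar mul z x).
Proof.
case: k => [|k] /=.
  by move=> ->; rewrite (starx0 HA) (star0x HA).
by move=> H; split; apply: (zeta_mono HA); case: (H x).
Qed.

Lemma zeta_cl {A : zmodType} {mul : A -> A -> A} {inv : A -> A} {one : A}
  (HA : is_brace mul inv one) k :
  [/\ (forall u v, zeta mul k u -> zeta mul k v -> zeta mul k (u + v)),
      (forall u, zeta mul k u -> zeta mul k (inv u))
    & (forall u, zeta mul k u -> zeta mul k (- u))].
Proof.
elim: k => [|k [addk invk oppk]].
  split => /=; [by move=> u v -> ->; rewrite addr0 | | by move=> u ->; rewrite oppr0].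
  move=> u ->. have [_ _ Hi _] := HA. by have := (Hi 0).2; rewrite (mul0x HA) (one0 HA).
have addk1 : forall u v, zeta mul k.+1 u -> zeta mul k.+1 v -> forall x, zeta mul k (bstar mul (u + v) x) /\ zeta mul k (bstar mul x (u + v)).
  move=> u v Hu Hv x; split; last first.
    by rewrite (starD HA); apply: (addk); [case: (Hu x) | case: (Hv x)].
  rewrite (starAdd HA).
  set d := bstar mul (inv u) v.
  have Hd : zeta mul k d by case: (Hv (inv u)).
  have Hc : zeta mul k (bstar mul (d + v) x).
    rewrite addrC (starAdd HA).
    set e := _ + d.
    have He : zeta mul k e by apply: (addk) => //; case: (zeta_star HA (inv v) Hd).
    apply: (addk); first apply: (addk).
    - by case: (zeta_star HA v (zeta_star HA x He).2).
    - by case: (Hv x).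
    - by case: (zeta_star HA x He).
  apply: (addk); first apply: (addk).
  - by case: (zeta_star HA u Hc).
  - by case: (Hu x).
  - exact: Hc.
have invk1 : forall u, zeta mul k.+1 u -> forall x, zeta mul k (bstar mul (inv u) x) /\ zeta mul k (bstar mul x (inv u)).
  move=> u Hu x; split.
    rewrite (starInvL HA); apply: (addk); apply: (oppk).
      by case: (zeta_star HA (inv u) (Hu x).1).
    by case: (Hu x).
  rewrite {1}(invE HA u) (starD HA) (starN HA) (starN HA).
  apply: (addk); apply: (oppk); first by case: (Hu x).
  by case: (zeta_star HA x (Hu (inv u)).2).
split => // u Hu.
rewrite (oppE HA); apply: (addk1); first exact: invk1.
by apply: (zeta_mono HA); case: (Hu (inv u)).
Qed.

Lemma zeta_add {A : zmodType} {mul : A -> A -> A} {inv : A -> A} {one : A}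
  (HA : is_brace mul inv one) {k u v} :
  zeta mul k u -> zeta mul k v -> zeta mul k (u + v).
Proof. by case: (zeta_cl HA k) => H _ _; apply: H. Qed.

Lemma zeta_opp {A : zmodType} {mul : A -> A -> A} {inv : A -> A} {one : A}
  (HA : is_brace mul inv one) {k u} : zeta mul k u -> zeta mul k (- u).
Proof. by case: (zeta_cl HA k) => _ _ H; apply: H. Qed.

Lemma zeta_sub {A : zmodType} {mul : A -> A -> A} {inv : A -> A} {one : A}
  (HA : is_brace mul inv one) {k u v} :
  zeta mul k u -> zeta mul k v -> zeta mul k (u - v).
Proof. by move=> Hu Hv; apply: (zeta_add HA) => //; apply: (zeta_opp HA). Qed.

Lemma zeta_mulz {A : zmodType} {mul : A -> A -> A} {inv : A -> A} {one : A}
  (HA : is_brace mul inv one) {k u} m : zeta mul k u -> zeta mul k (u *~ m).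
Proof.
move=> Hu; elim/int_ind2: m => [|m IH]; first by rewrite mulr0z; apply: (zeta0 HA).
by rewrite mulrzDr mulrzBr mulr1z; split; [apply: (zeta_add HA) | apply: (zeta_sub HA)].
Qed.

Lemma cycL {A : zmodType} {mul : A -> A -> A} {inv : A -> A} {one : A}
  (HA : is_brace mul inv one) a x s :
  bstar mul a a = 0 -> bstar mul a x = a *~ s ->
  forall r, bstar mul (a *~ r) x = a *~ (r * s).
Proof.
move=> Haa Hax.
have [_ _ Hi _] := HA.
have Hia : bstar mul (inv a) a = 0.
  by rewrite (starInvL HA) Haa (starx0 HA) oppr0 addr0.
have inva : inv a = - a by rewrite {1}(invE HA) Hia subr0.
have Hix : bstar mul (inv a) x = a *~ (- s).
  by rewrite (starInvL HA) Hax (starZ HA) Hia mul0rz oppr0 add0r mulrNz.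
elim/int_ind2 => [|r IH]; first by rewrite mulr0z mul0r (star0x HA).
split.
  have -> : a *~ (r + 1) = mul a (a *~ r).
    by rewrite (mul_star mul) (starZ HA) Haa mul0rz addr0 mulrzDr mulr1z addrC.
  by rewrite (starM HA) IH (starZ HA) Haa mul0rz add0r Hax -mulrzDr mulrDl mul1r addrC.
have -> : a *~ (r - 1) = mul (inv a) (a *~ r).
  by rewrite (mul_star mul) (starZ HA) Hia mul0rz addr0 mulrzBr mulr1z inva addrC.
by rewrite (starM HA) IH (starZ HA) Hia mul0rz add0r Hix -mulrzDr mulrBl mul1r addrC.
Qed.

Definition Icyc {A : zmodType} (mul : A -> A -> A) (a : A) (j : nat) : A -> Prop :=
  fun y => exists m : int, exists z, zeta mul j z /\ y = a *~ m + z.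

Lemma cycS {A : zmodType} {mul : A -> A -> A} {inv : A -> A} {one : A}
  (HA : is_brace mul inv one) {a} (Haa : bstar mul a a = 0) {j} l {z'} m {z} :
  zeta mul j.+1 z' -> zeta mul j z ->
  zeta mul j (bstar mul (a *~ l + z') (a *~ m + z)) /\
  zeta mul j (bstar mul (a *~ m + z) (a *~ l + z')).
Proof.
move=> Hz' Hz.
have La : forall r, bstar mul (a *~ r) a = 0.
  by move=> r; rewrite (cycL HA a a 0 Haa) ?mulr0 ?mulr0z.
split.
  rewrite (starD HA) (starZ HA); apply: (zeta_add HA); last by case: (zeta_star HA (a *~ l + z') Hz).
  apply: (zeta_mulz HA).
  rewrite (starAdd HA) La addr0.
  set c := _ + z'.
  have Hc : zeta mul j.+1 c.
    by apply: (zeta_add HA) => //; case: (zeta_star HA (inv (a *~ l)) Hz').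
  have Hca : zeta mul j (bstar mul c a) by case: (Hc a).
  by apply: (zeta_add HA) => //; case: (zeta_star HA (a *~ l) Hca).
rewrite (starAdd HA).
set c := _ + z.
have Hc : zeta mul j c.
  by apply: (zeta_add HA) => //; case: (zeta_star HA (inv (a *~ m)) Hz).
have Hcy : zeta mul j (bstar mul c (a *~ l + z')) by case: (zeta_star HA (a *~ l + z') Hc).
apply: (zeta_add HA) => //; apply: (zeta_add HA).
  by case: (zeta_star HA (a *~ m) Hcy).
rewrite (starD HA) (starZ HA) La mul0rz add0r.
by case: (Hz' (a *~ m)).
Qed.

Lemma cyc_sub {A : zmodType} {mul : A -> A -> A} {inv : A -> A} {one : A}
  (HA : is_brace mul inv one) {a} (Haa : bstar mul a a = 0) j :
  subbrace mul inv one (Icyc mul a j).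
Proof.
have H0 : Icyc mul a j 0 by exists 0, 0; split; [exact: (zeta0 HA) | rewrite mulr0z addr0].
split => //.
- move=> x y [m [z [Hz ->]]] [m' [z' [Hz' ->]]].
  exists (m - m'), (z - z'); split; first exact: (zeta_sub HA).
  by rewrite mulrzBr opprD addrACA.
- by rewrite (one0 HA).
- move=> x y [m [z [Hz ->]]] [m' [z' [Hz' ->]]].
  have Ht := (cycS HA Haa m' m (zeta_mono HA Hz') Hz).2.
  exists (m + m'), (z + z' + bstar mul (a *~ m + z) (a *~ m' + z')); split.
    by apply: (zeta_add HA) => //; apply: (zeta_add HA).
  rewrite [mul (a *~ m + z) _](mul_star mul); move: (bstar _ _ _) => t; by rewrite mulrzDr addrACA !addrA.
- move=> x [m [z [Hz ->]]].
  set w := a *~ m + z.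
  have Hwa : zeta mul j (bstar mul w a).
    have := (cycS HA Haa 1 m (zeta0 HA j.+1) Hz).2.
    by rewrite mulr1z addr0.
  have HT : zeta mul j (bstar mul (inv w) w).
    rewrite /w (starD HA) (starZ HA) (starInvL HA).
    apply: (zeta_add HA); last by case: (zeta_star HA (inv (a *~ m + z)) Hz).
    apply: (zeta_mulz HA); apply: (zeta_sub HA) => //.
    by apply: (zeta_opp HA); case: (zeta_star HA (inv (a *~ m + z)) Hwa).
  exists (- m), (- z - bstar mul (inv w) w); split.
    by apply: (zeta_sub HA) => //; apply: (zeta_opp HA).
  by rewrite {1}(invE HA) /w opprD mulrNz addrA.
Qed.

Lemma cyc_ideal_of {A : zmodType} {mul : A -> A -> A} {inv : A -> A} {one : A}
  (HA : is_brace mul inv one) {a} (Haa : bstar mul a a = 0) j :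
  ideal_of mul inv one (Icyc mul a j.+1) (Icyc mul a j).
Proof.
split; first exact: (cyc_sub HA Haa).
  by move=> y [m [z [Hz ->]]]; exists m, z; split => //; apply: (zeta_mono HA).
move=> y w [l [z' [Hz' ->]]] [m [z [Hz ->]]].
have [H1 H2] := cycS HA Haa l m Hz' Hz.
by split; [exists 0, (bstar mul (a *~ l + z') (a *~ m + z)) | exists 0, (bstar mul (a *~ m + z) (a *~ l + z'))];
  split => //; rewrite mulr0z add0r.
Qed.

Lemma cyc_top {A : zmodType} {mul : A -> A -> A} {inv : A -> A} {one : A}
  (HA : is_brace mul inv one) {a} (Haa : bstar mul a a = 0) n (Ha : zeta mul n.+1 a) :
  ideal mul inv one (Icyc mul a n).
Proof.
split; first exact: (cyc_sub HA Haa); first by [].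
move=> x w _ [m [z [Hz ->]]].
have Hw : zeta mul n.+1 (a *~ m + z).
  by apply: (zeta_add HA); [apply: (zeta_mulz HA) | apply: (zeta_mono HA)].
have [H1 H2] := Hw x.
by split; [exists 0, (bstar mul x (a *~ m + z)) | exists 0, (bstar mul (a *~ m + z) x)];
  split => //; rewrite mulr0z add0r.
Qed.

Lemma cyc_chain {A : zmodType} {mul : A -> A -> A} {inv : A -> A} {one : A}
  (HA : is_brace mul inv one) (HT : T_brace mul inv one) {a} (Haa : bstar mul a a = 0) n
  (Ha : zeta mul n.+1 a) : forall d j, (j + d)%N = n -> ideal mul inv one (Icyc mul a j).
Proof.
elim => [|d IH] j Hj.
  by rewrite addn0 in Hj; rewrite Hj; apply: (cyc_top HA Haa).
apply: (HT _ (Icyc mul a j.+1)); first exact: (cyc_ideal_of HA Haa).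
by apply: IH; rewrite -Hj addSnnS.
Qed.

Lemma iter_zero {A : zmodType} {mul : A -> A -> A} {a : A} {f : A -> A} {t : int} :
  (forall k b, zeta mul k.+1 b -> zeta mul k (f b)) ->
  (forall r, f (a *~ r) = a *~ (r * t)) ->
  forall k, zeta mul k a -> a *~ (t ^+ k) = 0.
Proof.
move=> Hf Hr.
suff: forall k r, zeta mul k (a *~ r) -> a *~ (r * t ^+ k) = 0.
  by move=> H k Ha; have := H k 1; rewrite mulr1z mul1r; apply.
elim => [|k IH] r /=; first by rewrite expr0 mulr1.
by move=> H; have := IH _ (eq_ind _ _ (Hf _ _ H) _ (Hr r)); rewrite exprS mulrA.
Qed.

Lemma inf_ord {A : zmodType} {a : A} :
  (forall k : nat, (0 < k)%N -> a *+ k <> 0) -> forall m, a *~ m = 0 -> m = 0.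
Proof.
move=> Hinf [k|k] H.
  case: k H => [//|k] H; exfalso; exact: (Hinf k.+1).
exfalso; apply: (Hinf k.+1) => //.
by move: H; rewrite NegzE mulrNz => /eqP; rewrite oppr_eq0 => /eqP.
Qed.

Theorem lemma3p2 (A : zmodType) (mul : A -> A -> A) (inv : A -> A) (one : A)
  (HA : is_brace mul inv one) (HT : T_brace mul inv one) (n : nat) (a : A) :
  zeta mul n a -> ~ zeta mul 1 a ->
  (forall k : nat, (0 < k)%N -> a *+ k <> 0) ->
  bstar mul a a <> 0.
Proof.
move=> Hn Hn1 Hinf Haa.
case: n Hn => [|n] Hn.
  by apply: (Hinf 1%N) => //; rewrite mulr1n.
have HI := cyc_chain HA HT Haa n Hn n 0 (add0n n).
case: HI => _ _ HI.
apply: Hn1 => x /=.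
have Ha0 : Icyc mul a 0 a by exists 1, 0; rewrite mulr1z addr0.
have [[t [z0 [Hz0 Et]]] [s [z1 [Hz1 Es]]]] := HI x a I Ha0.
rewrite /= in Hz0 Hz1; rewrite Hz0 addr0 in Et; rewrite Hz1 addr0 in Es.
split.
  have H1 : forall k b, zeta mul k.+1 b -> zeta mul k (bstar mul b x).
    by move=> k b Hb; case: (Hb x).
  have H2 : forall r, bstar mul (a *~ r) x = a *~ (r * s) by move=> r; apply: (cycL HA).
  have := iter_zero H1 H2 _ Hn => /(inf_ord Hinf) /eqP.
  by rewrite expf_eq0 /= => /eqP t0; rewrite Es t0 mulr0z.
have H1 : forall k b, zeta mul k.+1 b -> zeta mul k (bstar mul x b).
  by move=> k b Hb; case: (Hb x).
have H2 : forall r, bstar mul x (a *~ r) = a *~ (r * t).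
  by move=> r; rewrite (starZ HA) Et -mulrzA mulrC.
have := iter_zero H1 H2 _ Hn => /(inf_ord Hinf) /eqP.
by rewrite expf_eq0 /= => /eqP t0; rewrite Et t0 mulr0z.
Qed.
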